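(* Let $q$ be an odd prime power and let $B(q)$ be the Brown graph. Let $c$ be a quadric vertex of $B(q)$ and let $a,b$ be two distinct neighbors of $c$ in $B(q)$. Let $A=N_{B(q)}(a)\setminus N_{B(q)}(b)$ and $B=N_{B(q)}(b)\setminus N_{B(q)}(a)$, and let $M$ be the set of edges of $B(q)$ with one endpoint in $A$ and the other in $B$. Let $H$ be the graph obtained from $B(q)$ by deleting the vertex $c$ and all edges of $M$. Then $H$ is $(q-6)$-vertex-connected.
   Context: Let $\mathbb{F}_q$ be the field with $q$ elements. The Brown graph $B(q)$ has as vertices the one-dimensional subspaces of $\mathbb{F}_q^3$, i.e. the equivalence classes $[x]$ of nonzero vectors $x\in\mathbb{F}_q^3$ under $x\sim \alpha x$ for $\alpha\in\mathbb{F}_q\setminus\{0\}$; two distinct vertices $[x]$ and $[y]$ are adjacent if and only if $xy^T=0$. A vertex $[x]$ is called quadric if $xx^T=0$. $N_{B(q)}(v)$ denotes the set of neighbors of $v$ in $B(q)$. A graph is $k$-vertex-connected if between any two distinct vertices there are at least $k$ internally vertex-disjoint paths. *)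

(* Defs.v *)
From HB Require Import structures.
From mathcomp Require Import all_boot all_order all_algebra all_field.
Set Implicit Arguments. Unset Strict Implicit. Unset Printing Implicit Defensive.
Import GRing.Theory.
Local Open Scope ring_scope.

Section Brown.
Variable F : finFieldType.

(* a one-dimensional subspace of F^3, as a set of row vectors [x] = {a x | a in F} *)
Definition is_point (S : {set 'rV[F]_3}) : bool :=
  [exists x : 'rV[F]_3, (x != 0) && (S == [set a *: x | a : F])].

Definition point := {S : {set 'rV[F]_3} | is_point S}.

Definition bform (x y : 'rV[F]_3) : F := (x *m y^T) 0 0.

Definition brown_adj (u v : point) : bool :=
  (u != v) &&
  [exists x : 'rV[F]_3, exists y : 'rV[F]_3,
     [&& x \in val u, y \in val v, x != 0, y != 0 & bform x y == 0]].

Definition quadric (u : point) : bool :=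
  [exists x : 'rV[F]_3, [&& x \in val u, x != 0 & bform x x == 0]].

Definition nbhd (u : point) : {set point} := [set v | brown_adj u v].
End Brown.

Section Conn.
Variable V : finType.

(* p is the list of vertices after s; a path from s to t inside D *)
Definition is_path_in (D : {set V}) (e : rel V) (s t : V) (p : seq V) : bool :=
  [&& path e s p, last s p == t, uniq (s :: p) & all (mem D) (s :: p)].

(* internal vertices of the path s :: p (excluding both endpoints) *)
Definition internal (s : V) (p : seq V) : seq V := behead (belast s p).

Definition k_vertex_connected (D : {set V}) (e : rel V) (k : nat) : Prop :=
  forall s t, s \in D -> t \in D -> s != t ->
  exists ps : seq (seq V),
    [/\ k <= size ps, uniq ps,
        all (is_path_in D e s t) ps &
        forall i j, i < size ps -> j < size ps -> i != j ->
          [disjoint internal s (nth [::] ps i) & internal s (nth [::] ps j)]]%N.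
End Conn.

(* Main.v *)
Require Import Defs.
From HB Require Import structures.
From mathcomp Require Import all_boot all_order all_algebra all_field.
From mathcomp Require Import ring.
Set Implicit Arguments. Unset Strict Implicit. Unset Printing Implicit Defensive.
Lemma leq_cardsU (T : finType) (A B : {set T}) : #|A :|: B| <= #|A| + #|B|.
Proof. by rewrite cardsU leq_subr. Qed.

Lemma disj3 (T : finType) (x1 x2 x3 : T) (s : seq T) :
  x1 \notin s -> x2 \notin s -> x3 \notin s -> [disjoint [:: x1; x2; x3] & s].
Proof.
move=> h1 h2 h3; rewrite !disjoint_cons h1 h2 h3 /=.
by apply: eq_disjoint0.
Qed.

Section Abs.
Variables (P : finType) (perp adj : rel P) (meet : P -> P -> P) (q : nat).
Hypothesis perpC : forall u v, perp u v = perp v u.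
Hypothesis adjE : forall u v, adj u v = (u != v) && perp u v.
Hypothesis uniq_perp : forall u v w w', u != v -> perp w u -> perp w v ->
  perp w' u -> perp w' v -> w = w'.
Hypothesis meetP : forall u v, u != v -> perp (meet u v) u && perp (meet u v) v.
Hypothesis Lcount : forall p, q <= #|[set z | perp p z]|.

Lemma le1 (S : {set P}) : (forall x y, x \in S -> y \in S -> x = y) -> #|S| <= 1.
Proof. by move=> h; apply/card_le1_eqP => x y hx hy; rewrite (h y x). Qed.

Theorem absmain (c a b : P) (hc : perp c c) (ha : adj c a) (hb : adj c b) (hab : a != b) :
  let A := [set v | adj a v] :\: [set v | adj b v] in
  let B := [set v | adj b v] :\: [set v | adj a v] in
  let eH := fun u v : P =>
    adj u v && ~~ (((u \in A) && (v \in B)) || ((u \in B) && (v \in A))) in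
  k_vertex_connected [set~ c] eH (q - 6).
Proof.
move=> A B eH s t hs ht hst.
case: (leqP q 6) => hq.
  exists [::]; split => //; first by rewrite leqn0 subn_eq0.
rewrite !in_setC1 in hs ht.
move: ha hb; rewrite !adjE => /andP[nca pca] /andP[ncb pcb].
have nab : ~~ perp a b.
  apply/negP => pab; move/negP: ncb; apply; apply/eqP.
  by apply: (uniq_perp (u := a) (v := c)); rewrite 1?eq_sym // perpC.
pose Lc := [set z | perp c z].
pose bad := [set a; b; c] :|: [set z in Lc | (z != c) && (perp z s || (z == s))]
   :|: [set z in Lc | (z != c) && (perp z t || (z == t))].
have badS : forall u, u != c -> #|[set z in Lc | (z != c) && (perp z u || (z == u))]| <= 1.
  move=> u huc; apply: le1 => x y; rewrite !inE => /and3P[cx xc hx] /and3P[cy yc hy].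
  have gen : forall z, perp c z -> z != c -> perp z u -> perp u c -> False.
    move=> z cz zc zu uc; move/negP: zc; apply; apply/eqP.
    by apply: (uniq_perp (u := u) (v := c)); rewrite // perpC.
  case/orP: hx => [xu|/eqP xu]; case/orP: hy => [yu|/eqP yu].
  - case: (boolP (perp u c)) => uc; first by case: (gen x).
    by apply: (uniq_perp (u := u) (v := c)); rewrite // perpC.
  - by case: (gen x) => //; rewrite -yu perpC.
  - by case: (gen y) => //; rewrite -xu perpC.
  - by rewrite xu yu.
have cbad : #|bad| <= 5.
  apply: (leq_trans (leq_cardsU _ _)).
  rewrite -[5]/(3 + 1 + 1); apply: leq_add; last exact: badS.
  apply: (leq_trans (leq_cardsU _ _)); apply: leq_add; last exact: badS.
  apply: (leq_trans (leq_cardsU _ _)); rewrite cards2 cards1; by case: (a != b).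
have [p pLc pnb] : exists2 p, p \in Lc & p \notin bad.
  case: (boolP [exists p, (p \in Lc) && (p \notin bad)]) => [/existsP[p /andP[h1 h2]]|hn].
    by exists p.
  have : Lc \subset bad.
    apply/subsetP => z hz; apply/negPn/negP => hz'; move/negP: hn; apply.
    by apply/existsP; exists z; rewrite hz hz'.
  move/subset_leq_card; move: (Lcount c) => h1 h2.
  have : q <= 5 by apply: (leq_trans h1 (leq_trans h2 cbad)).
  by rewrite leqNgt (leq_trans _ hq).
move: pLc pnb; rewrite !inE => cp.
rewrite cp /= !negb_or => /andP[/andP[/andP[/andP[pa pb] pc] hps] hpt].
rewrite pc /= negb_or in hps; rewrite pc /= negb_or in hpt.
case/andP: hps => nps ps; case/andP: hpt => npt pt.
clear badS cbad.
pose X z := meet z s. pose Y z := meet z t.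
pose Medge u v := ((u \in A) && (v \in B)) || ((u \in B) && (v \in A)).
have zs : forall z, perp p z -> z != s.
  by move=> z pz; apply: contraNneq nps => <-.
have zt : forall z, perp p z -> z != t.
  by move=> z pz; apply: contraNneq npt => <-.
have Xp : forall z, perp p z -> perp (X z) z && perp (X z) s.
  by move=> z pz; apply: meetP; apply: zs.
have Yp : forall z, perp p z -> perp (Y z) z && perp (Y z) t.
  by move=> z pz; apply: meetP; apply: zt.
have vinj : forall z1 z2 v, perp p z1 -> perp p z2 -> perp v z1 -> perp v z2 ->
    perp v s || perp v t -> z1 = z2.
  move=> z1 z2 v p1 p2 v1 v2 vst; case: (eqVneq z1 z2) => // ne.
  have vp : v = p by apply: (uniq_perp ne v1 v2 p1 p2).
  by move: vst; rewrite vp (negbTE nps) (negbTE npt).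
have Xinj : forall z1 z2, perp p z1 -> perp p z2 -> X z1 = X z2 -> z1 = z2.
  move=> z1 z2 p1 p2 e; case/andP: (Xp z1 p1) => h1 h2; case/andP: (Xp z2 p2) => h3 _.
  by apply: (vinj z1 z2 (X z1)) => //; [rewrite e | rewrite h2].
have Yinj : forall z1 z2, perp p z1 -> perp p z2 -> Y z1 = Y z2 -> z1 = z2.
  move=> z1 z2 p1 p2 e; case/andP: (Yp z1 p1) => h1 h2; case/andP: (Yp z2 p2) => h3 _.
  by apply: (vinj z1 z2 (Y z1)) => //; [rewrite e | rewrite h2 orbT].
have XY : forall z1 z2, perp p z1 -> perp p z2 -> X z1 = Y z2 -> z1 = z2.
  move=> z1 z2 p1 p2 e; case/andP: (Xp z1 p1) => h1 h2; case/andP: (Yp z2 p2) => h3 _.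
  by apply: (vinj z1 z2 (X z1)) => //; [rewrite e | rewrite h2].
have memA : forall u, (u \in A) = adj a u && ~~ adj b u.
  by move=> u; rewrite !inE andbC.
have memB : forall u, (u \in B) = adj b u && ~~ adj a u.
  by move=> u; rewrite !inE andbC.
have AB : forall z, perp p z -> (z \in A) || (z \in B) -> z = c.
  move=> z pz; rewrite memA memB !adjE => /orP[/andP[/andP[_ az] _]|/andP[/andP[_ bz] _]].
  - apply: (uniq_perp (u := a) (v := p) (w := z) (w' := c)); rewrite 1?eq_sym //.
    + by rewrite perpC. + by rewrite perpC.
  - apply: (uniq_perp (u := b) (v := p) (w := z) (w' := c)); rewrite 1?eq_sym //.
    + by rewrite perpC. + by rewrite perpC.
have Xc : forall z, perp p z -> X z = c -> z = c.
  move=> z pz e; case/andP: (Xp z pz) => h _; rewrite e in h.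
  apply: (uniq_perp (u := c) (v := p) (w := z) (w' := c)); rewrite 1?eq_sym //.
  + by rewrite perpC. + by rewrite perpC.
have Yc : forall z, perp p z -> Y z = c -> z = c.
  move=> z pz e; case/andP: (Yp z pz) => h _; rewrite e in h.
  apply: (uniq_perp (u := c) (v := p) (w := z) (w' := c)); rewrite 1?eq_sym //.
  + by rewrite perpC. + by rewrite perpC.
have MedgeC : forall u v, Medge u v = Medge v u.
  by move=> u v; rewrite /Medge orbC; congr (_ || _); apply: andbC.
have keyA : forall u x1 x2, perp x1 u -> perp x2 u -> adj a u -> adj b x1 -> adj b x2 -> x1 = x2.
  move=> u x1 x2 h1 h2; rewrite !adjE => /andP[_ au] /andP[_ b1] /andP[_ b2].
  have ub : u != b by apply: contraNneq nab => e; rewrite -e.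
  by apply: (uniq_perp ub h1 _ h2); rewrite perpC.
have keyB : forall u x1 x2, perp x1 u -> perp x2 u -> adj b u -> adj a x1 -> adj a x2 -> x1 = x2.
  move=> u x1 x2 h1 h2; rewrite !adjE => /andP[_ bu] /andP[_ a1] /andP[_ a2].
  have ua : u != a by apply: contraNneq nab => e; rewrite perpC -e.
  by apply: (uniq_perp ua h1 _ h2); rewrite perpC.
have Muniq : forall u x1 x2, perp x1 u -> perp x2 u -> Medge u x1 -> Medge u x2 -> x1 = x2.
  move=> u x1 x2 h1 h2; rewrite /Medge !memA !memB.
  case/orP => /andP[/andP[u1 u1'] /andP[x1' _]]; case/orP => /andP[/andP[u2 u2'] /andP[x2' _]].
  - exact: (keyA u).
  - by rewrite u2 in u1'.
  - by rewrite u1 in u2'.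
  - exact: (keyB u).
pose good z := [&& ~~ perp z s, ~~ perp z t, X z != Y z, z != c,
   ~~ Medge s (X z) & ~~ Medge t (Y z)].
pose Z := [set z | perp p z && good z].
pose S1 := [set z | perp p z && perp z s].
pose S2 := [set z | perp p z && perp z t].
pose S3 := [set z | perp p z && (X z == Y z)].
pose S4 := [set z | perp p z && (z == c)].
pose S5 := [set z | perp p z && Medge s (X z)].
pose S6 := [set z | perp p z && Medge t (Y z)].
have cS1 : #|S1| <= 1.
  apply: le1 => z1 z2; rewrite !inE => /andP[p1 h1] /andP[p2 h2].
  by apply: (uniq_perp (u := p) (v := s)); rewrite // perpC.
have cS2 : #|S2| <= 1.
  apply: le1 => z1 z2; rewrite !inE => /andP[p1 h1] /andP[p2 h2].
  by apply: (uniq_perp (u := p) (v := t)); rewrite // perpC.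
have cS3 : #|S3| <= 1.
  apply: le1 => z1 z2; rewrite !inE => /andP[p1 /eqP h1] /andP[p2 /eqP h2].
  apply: Xinj => //.
  case/andP: (Xp z1 p1) => _ a1; case/andP: (Yp z1 p1) => _ b1.
  case/andP: (Xp z2 p2) => _ a2; case/andP: (Yp z2 p2) => _ b2.
  by apply: (uniq_perp hst) => //; rewrite ?h1 ?h2.
have cS4 : #|S4| <= 1.
  by apply: le1 => z1 z2; rewrite !inE => /andP[_ /eqP ->] /andP[_ /eqP ->].
have cS5 : #|S5| <= 1.
  apply: le1 => z1 z2; rewrite !inE => /andP[p1 h1] /andP[p2 h2].
  apply: Xinj => //; apply: (Muniq s) => //.
  + by case/andP: (Xp z1 p1). + by case/andP: (Xp z2 p2).
have cS6 : #|S6| <= 1.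
  apply: le1 => z1 z2; rewrite !inE => /andP[p1 h1] /andP[p2 h2].
  apply: Yinj => //; apply: (Muniq t) => //.
  + by case/andP: (Yp z1 p1). + by case/andP: (Yp z2 p2).
have cZ : #|[set z | perp p z]| <= #|Z| + 6.
  have sub : [set z | perp p z] \subset Z :|: S1 :|: S2 :|: S3 :|: S4 :|: S5 :|: S6.
    apply/subsetP => z; rewrite !inE => pz; rewrite pz /= /good.
    by case: (perp z s); case: (perp z t); case: (X z == Y z); case: (z == c);
       case: (Medge s (X z)); case: (Medge t (Y z)).
  apply: (leq_trans (subset_leq_card sub)).
  apply: (leq_trans (leq_cardsU _ _)); rewrite -[6]/(5 + 1) addnA leq_add //.
  apply: (leq_trans (leq_cardsU _ _)); rewrite -[5]/(4 + 1) addnA leq_add //.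
  apply: (leq_trans (leq_cardsU _ _)); rewrite -[4]/(3 + 1) addnA leq_add //.
  apply: (leq_trans (leq_cardsU _ _)); rewrite -[3]/(2 + 1) addnA leq_add //.
  apply: (leq_trans (leq_cardsU _ _)); rewrite -[2]/(1 + 1) addnA leq_add //.
  by apply: (leq_trans (leq_cardsU _ _)); rewrite leq_add.
have pathgood : forall z, z \in Z -> is_path_in [set~ c] eH s t [:: X z; z; Y z; t].
  move=> z; rewrite inE => /andP[pz].
  case/andP => nzs /and5P[nzt nxy znc nMs nMt].
  case/andP: (Xp z pz) => xz xs; case/andP: (Yp z pz) => yz yt.
  have xns : X z != s by apply: contraNneq nzs => e; rewrite perpC -e.
  have xnz : X z != z by apply: contraNneq nzs => e; rewrite -{1}e.
  have xnt : X z != t by apply: contraNneq nzt => e; rewrite perpC -e.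
  have yns : Y z != s by apply: contraNneq nzs => e; rewrite perpC -e.
  have ynz : Y z != z by apply: contraNneq nzt => e; rewrite -{1}e.
  have ynt : Y z != t by apply: contraNneq nzt => e; rewrite perpC -e.
  have zns := zs z pz; have znt := zt z pz.
  have xnc : X z != c by apply: contraNneq znc => e; apply/eqP; exact: Xc.
  have ync : Y z != c by apply: contraNneq znc => e; apply/eqP; exact: Yc.
  have zAB : ~~ ((z \in A) || (z \in B)).
    by apply: contra znc => h; apply/eqP; exact: AB.
  rewrite negb_or in zAB; case/andP: zAB => /negbTE zA /negbTE zB.
  rewrite MedgeC in nMt.
  rewrite /is_path_in /= /eH !adjE.
  rewrite /Medge in nMs nMt.
  rewrite nMs nMt zA zB !andbF /= !in_cons !in_nil !in_setC1 !orbF !negb_or !andbT.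
  rewrite [perp s _]perpC xs xz [perp z _]perpC yz yt eqxx.
  by repeat (apply/andP; split); try done; rewrite eq_sym.
have disj : forall z1 z2, z1 \in Z -> z2 \in Z -> z1 != z2 ->
    [disjoint [:: X z1; z1; Y z1] & [:: X z2; z2; Y z2]].
  move=> z1 z2; rewrite !inE => /andP[p1 /andP[nzs1 /andP[nzt1 _]]]
     /andP[p2 /andP[nzs2 /andP[nzt2 _]]] n12.
  case/andP: (Xp z1 p1) => xz1 xs1; case/andP: (Yp z1 p1) => yz1 yt1.
  case/andP: (Xp z2 p2) => xz2 xs2; case/andP: (Yp z2 p2) => yz2 yt2.
  have f1 : X z1 != X z2 := contra_neq (Xinj _ _ p1 p2) n12.
  have f2 : X z1 != Y z2 := contra_neq (XY _ _ p1 p2) n12.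
  have f3 : X z1 != z2 by apply: contraNneq nzs2 => e; rewrite -e.
  have f4 : z1 != X z2 by apply: contraNneq nzs1 => e; rewrite e.
  have f5 : z1 != Y z2 by apply: contraNneq nzt1 => e; rewrite e.
  have f6 : Y z1 != Y z2 := contra_neq (Yinj _ _ p1 p2) n12.
  have f7 : Y z1 != X z2 by rewrite eq_sym (contra_neq (XY _ _ p2 p1)) // eq_sym.
  have f8 : Y z1 != z2 by apply: contraNneq nzt2 => e; rewrite -e.
  apply: disj3; rewrite !in_cons !in_nil !orbF !negb_or;
    by rewrite ?f1 ?f2 ?f3 ?f4 ?f5 ?f6 ?f7 ?f8 ?n12.
exists [seq [:: X z; z; Y z; t] | z <- enum Z]; split.
- rewrite size_map -cardE leq_subLR addnC.
  exact: (leq_trans (Lcount p) cZ).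
- rewrite map_inj_uniq ?enum_uniq //.
  by move=> z1 z2 [_ ->].
- by apply/allP => pth /mapP [z hz ->]; apply: pathgood; rewrite -mem_enum.
- move=> i j; rewrite size_map => hi hj hij.
  rewrite !(nth_map s) //.
  rewrite /internal /=.
  have hzi : nth s (enum Z) i \in Z by rewrite -mem_enum mem_nth.
  have hzj : nth s (enum Z) j \in Z by rewrite -mem_enum mem_nth.
  apply: disj => //.
  by rewrite nth_uniq ?enum_uniq.
Qed.
End Abs.

Section Geo.
Import GRing.Theory.
Local Open Scope ring_scope.
Variable F : finFieldType.
Implicit Types (u v : point F) (x y : 'rV[F]_3).

Definition i0 : 'I_3 := @Ordinal 3 0 isT.
Definition i1 : 'I_3 := @Ordinal 3 1 isT.
Definition i2 : 'I_3 := @Ordinal 3 2 isT.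

Lemma ord3P (P : 'I_3 -> Prop) : P i0 -> P i1 -> P i2 -> forall i, P i.
Proof.
move=> h0 h1 h2 [[|[|[|//]]] Hi].
- by have -> : Ordinal Hi = i0 by apply/val_inj.
- by have -> : Ordinal Hi = i1 by apply/val_inj.
- by have -> : Ordinal Hi = i2 by apply/val_inj.
Qed.

Lemma rv3P x y : x 0 i0 = y 0 i0 -> x 0 i1 = y 0 i1 -> x 0 i2 = y 0 i2 -> x = y.
Proof. by move=> h0 h1 h2; apply/rowP; apply: ord3P. Qed.

Lemma bformE x y : bform x y = x 0 i0 * y 0 i0 + x 0 i1 * y 0 i1 + x 0 i2 * y 0 i2.
Proof.
rewrite /bform !mxE !big_ord_recr big_ord0 /= add0r !mxE.
have -> : widen_ord (leqnSn 2) (widen_ord (leqnSn 1) ord_max) = i0 by apply/val_inj.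
have -> : widen_ord (leqnSn 2) (@ord_max 1) = i1 by apply/val_inj.
by have -> : (@ord_max 2) = i2 by apply/val_inj.
Qed.

Lemma bformC x y : bform x y = bform y x.
Proof. by rewrite !bformE ![y 0 _ * _]mulrC. Qed.

Lemma bformZl a x y : bform (a *: x) y = a * bform x y.
Proof. rewrite !bformE !mxE; ring. Qed.
Lemma bformZr a x y : bform x (a *: y) = a * bform x y.
Proof. by rewrite bformC bformZl bformC. Qed.

Definition mkv (e0 e1 e2 : F) : 'rV[F]_3 :=
  \row_(j < 3) (if j == i0 then e0 else if j == i1 then e1 else e2).
Lemma mkv0 e0 e1 e2 : mkv e0 e1 e2 0 i0 = e0. Proof. by rewrite mxE. Qed.
Lemma mkv1 e0 e1 e2 : mkv e0 e1 e2 0 i1 = e1. Proof. by rewrite mxE. Qed.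
Lemma mkv2 e0 e1 e2 : mkv e0 e1 e2 0 i2 = e2. Proof. by rewrite mxE. Qed.

Definition cross x y := mkv (x 0 i1 * y 0 i2 - x 0 i2 * y 0 i1)
  (x 0 i2 * y 0 i0 - x 0 i0 * y 0 i2) (x 0 i0 * y 0 i1 - x 0 i1 * y 0 i0).

Lemma nz3 x : x != 0 -> [\/ x 0 i0 != 0, x 0 i1 != 0 | x 0 i2 != 0].
Proof.
move=> hx; apply/or3P; apply: contraR hx; rewrite !negb_or !negbK => /and3P[/eqP h0 /eqP h1 /eqP h2].
by apply/eqP; apply: rv3P; rewrite ?mxE.
Qed.

Lemma solve1 (a b c d : F) : d != 0 -> a * c = b * d -> b = a / d * c.
Proof. by move=> hd h; rewrite mulrAC h mulfK. Qed.

Lemma crossE0 x y : cross x y 0 i0 = x 0 i1 * y 0 i2 - x 0 i2 * y 0 i1. Proof. by rewrite mxE. Qed.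
Lemma crossE1 x y : cross x y 0 i1 = x 0 i2 * y 0 i0 - x 0 i0 * y 0 i2. Proof. by rewrite mxE. Qed.
Lemma crossE2 x y : cross x y 0 i2 = x 0 i0 * y 0 i1 - x 0 i1 * y 0 i0. Proof. by rewrite mxE. Qed.

Lemma crossK (w n : 'rV[F]_3) : n != 0 -> cross w n = 0 -> exists l, w = l *: n.
Proof.
move=> hn hc.
have e0 := crossE0 w n; have e1 := crossE1 w n; have e2 := crossE2 w n.
rewrite hc mxE in e0; rewrite hc mxE in e1; rewrite hc mxE in e2.
move/esym/eqP: e0; move/esym/eqP: e1; move/esym/eqP: e2.
rewrite !subr_eq0 => /eqP e2 /eqP e1 /eqP e0.
case/nz3: hn => h.
- exists (w 0 i0 / n 0 i0); apply: rv3P; rewrite !mxE ?divfK //.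
  + by apply: solve1 => //; rewrite e2.
  + by apply: solve1 => //; rewrite e1.
- exists (w 0 i1 / n 0 i1); apply: rv3P; rewrite !mxE ?divfK //.
  + by apply: solve1 => //; rewrite e2.
  + by apply: solve1 => //; rewrite e0.
- exists (w 0 i2 / n 0 i2); apply: rv3P; rewrite !mxE ?divfK //.
  + by apply: solve1 => //; rewrite e1.
  + by apply: solve1 => //; rewrite e0.
Qed.

Lemma cross_self x : cross x x = 0.
Proof. by apply: rv3P; rewrite /cross /mkv !mxE /=; ring. Qed.
Lemma crossC x y : cross y x = - cross x y.
Proof. by apply: rv3P; rewrite /cross /mkv !mxE /=; ring. Qed.
Lemma crossZZ (l m : F) x : cross (l *: x) (m *: x) = 0.
Proof. by apply: rv3P; rewrite /cross /mkv !mxE /=; ring. Qed.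
Lemma cross_triple x y z :
  cross x (cross y z) = (bform x z) *: y - (bform x y) *: z.
Proof. by apply: rv3P; rewrite /cross /mkv !bformE !mxE /=; ring. Qed.
Lemma bform_cross_l x y : bform (cross x y) x = 0.
Proof. by rewrite /cross /mkv !bformE !mxE /=; ring. Qed.
Lemma bform_cross_r x y : bform (cross x y) y = 0.
Proof. by rewrite /cross /mkv !bformE !mxE /=; ring. Qed.

Definition rep u : 'rV[F]_3 := xchoose (existsP (valP u)).
Lemma repP u : rep u != 0 /\ val u = [set a *: rep u | a : F].
Proof. by have /andP[h1 /eqP h2] := xchooseP (existsP (valP u)). Qed.
Lemma rep_nz u : rep u != 0. Proof. exact: (proj1 (repP u)). Qed.
Lemma memP u x : reflect (exists a, x = a *: rep u) (x \in val u).
Proof.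
rewrite (proj2 (repP u)); apply: (iffP imsetP) => [[a _ ->]|[a ->]]; by exists a.
Qed.
Lemma mem_nz u x : x \in val u -> x != 0 -> exists2 a, a != 0 & x = a *: rep u.
Proof.
case/memP => a -> hx; exists a => //.
by apply/eqP => a0; move: hx; rewrite a0 scale0r eqxx.
Qed.
Lemma rep_mem u : rep u \in val u.
Proof. by apply/memP; exists 1; rewrite scale1r. Qed.

Definition perp u v := bform (rep u) (rep v) == 0.
Lemma perpC u v : perp u v = perp v u.
Proof. by rewrite /perp bformC. Qed.

Lemma pt_eq u v : (u == v) = (cross (rep u) (rep v) == 0).
Proof.
apply/eqP/eqP => [->|h]; first exact: cross_self.
have h' : cross (rep v) (rep u) = 0 by rewrite crossC h oppr0.
have [l hl] := crossK (rep_nz u) h'.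
have l0 : l != 0.
  by apply/eqP => l0; move: (rep_nz v); rewrite hl l0 scale0r eqxx.
apply: val_inj; rewrite (proj2 (repP u)) (proj2 (repP v)) hl.
apply/setP => x; apply/imsetP/imsetP => [[a _ ->]|[a _ ->]].
- by exists (a / l) => //; rewrite scalerA divfK.
- by exists (a * l) => //; rewrite scalerA.
Qed.

Definition ptof (d : point F) x : point F := insubd d [set a *: x | a : F].
Lemma ptofP d x : x != 0 -> exists2 a, a != 0 & x = a *: rep (ptof d x).
Proof.
move=> hx; apply: mem_nz => //.
rewrite val_insubd.
have -> : is_point [set a *: x | a : F].
  by apply/existsP; exists x; rewrite hx eqxx.
by apply/imsetP; exists 1; rewrite ?inE ?scale1r.
Qed.

Lemma bform_eq0Zl a x y : a != 0 -> (bform (a *: x) y == 0) = (bform x y == 0).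
Proof. by move=> ha; rewrite bformZl mulf_eq0 (negbTE ha). Qed.
Lemma bform_eq0Zr a x y : a != 0 -> (bform x (a *: y) == 0) = (bform x y == 0).
Proof. by move=> ha; rewrite bformZr mulf_eq0 (negbTE ha). Qed.

Lemma adjE u v : brown_adj u v = (u != v) && perp u v.
Proof.
rewrite /brown_adj; congr (_ && _); apply/existsP/idP.
- case=> x /existsP [y /and5P [hx hy hx0 hy0 hb]].
  have [a ha ea] := mem_nz hx hx0; have [b hb' eb] := mem_nz hy hy0.
  by move: hb; rewrite ea eb bform_eq0Zl // bform_eq0Zr.
- move=> h; exists (rep u); apply/existsP; exists (rep v).
  by rewrite !rep_mem !rep_nz.
Qed.

Lemma quadricE u : quadric u = perp u u.
Proof.
apply/existsP/idP.
- case=> x /and3P [hx hx0 hb].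
  have [a ha ea] := mem_nz hx hx0.
  by move: hb; rewrite ea bform_eq0Zl // bform_eq0Zr.
- by move=> h; exists (rep u); rewrite rep_mem rep_nz.
Qed.

Definition meet u v := odflt u [pick w | perp w u && perp w v].

Lemma meetP u v : u != v -> perp (meet u v) u && perp (meet u v) v.
Proof.
move=> huv.
have hn : cross (rep u) (rep v) != 0 by rewrite -pt_eq.
have [a ha ea] := ptofP u hn.
move: ea; set w := ptof u _ => ea.
have H : perp w u && perp w v.
  rewrite /perp -(bform_eq0Zl (rep w) (rep u) ha) -(bform_eq0Zl (rep w) (rep v) ha) -ea.
  by rewrite bform_cross_l bform_cross_r eqxx.
rewrite /meet; case: pickP => [w' //|/(_ w)].
by rewrite H.
Qed.

Lemma uniq_perp u v w w' : u != v -> perp w u -> perp w v -> perp w' u -> perp w' v -> w = w'.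
Proof.
move=> huv h1 h2 h3 h4.
have hn : cross (rep u) (rep v) != 0 by rewrite -pt_eq.
have [l hl] : exists l, rep w = l *: cross (rep u) (rep v).
  apply: crossK => //; rewrite cross_triple (eqP h1) (eqP h2).
  by rewrite !scale0r subr0.
have [m hm] : exists m, rep w' = m *: cross (rep u) (rep v).
  apply: crossK => //; rewrite cross_triple (eqP h3) (eqP h4).
  by rewrite !scale0r subr0.
by apply/eqP; rewrite pt_eq hl hm crossZZ.
Qed.

Lemma inj_aux (c l m al be : F) : c != 0 -> be != 0 -> be * c = al * c ->
  be * (l * c) = al * (m * c) -> l = m.
Proof.
move=> hc hb e1 e2; have e : be = al by apply: (mulIf hc).
rewrite -e in e2; apply: (mulIf hc); exact: (mulfI hb).
Qed.

Lemma Lcount_gen p (f : F -> 'rV[F]_3) :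
  (forall l, f l != 0) -> (forall l, bform (rep p) (f l) = 0) ->
  (forall l m al be, be != 0 -> be *: f l = al *: f m -> l = m) ->
  (#|F| <= #|[set z | perp p z]|)%N.
Proof.
move=> fnz forth finj.
pose g l := ptof p (f l).
have ginj : injective g.
  move=> l m e.
  have [al hal eal] := ptofP p (fnz l).
  have [be hbe ebe] := ptofP p (fnz m).
  apply: (finj l m al be hbe).
  by rewrite eal ebe -/(g l) -/(g m) e !scalerA mulrC.
rewrite -cardsT -(card_imset _ ginj); apply: subset_leq_card.
apply/subsetP => z /imsetP [l _ ->]; rewrite inE.
have [al hal eal] := ptofP p (fnz l).
by rewrite /perp -(bform_eq0Zr _ _ hal) -eal forth.
Qed.

Lemma Lcount p : (#|F| <= #|[set z | perp p z]|)%N.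
Proof.
have hn := rep_nz p; set n := rep p.
case/nz3: hn => h.
- apply: (@Lcount_gen p (fun l => mkv (- (n 0 i1 + l * n 0 i2)) (n 0 i0) (l * n 0 i0))).
  + move=> l; apply/eqP => /(congr1 (fun r : 'rV[F]_3 => r 0 i1)); rewrite !mxE /=.
    by apply/eqP.
  + by move=> l; rewrite bformE !mxE /=; ring.
  + move=> l m al be hb /rowP e.
    have e1 := e i1; have e2 := e i2; rewrite !mxE /= in e1 e2.
    exact: (inj_aux h hb e1 e2).
- apply: (@Lcount_gen p (fun l => mkv (n 0 i1) (- (n 0 i0 + l * n 0 i2)) (l * n 0 i1))).
  + move=> l; apply/eqP => /(congr1 (fun r : 'rV[F]_3 => r 0 i0)); rewrite !mxE /=.
    by apply/eqP.
  + by move=> l; rewrite bformE !mxE /=; ring.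
  + move=> l m al be hb /rowP e.
    have e1 := e i0; have e2 := e i2; rewrite !mxE /= in e1 e2.
    exact: (inj_aux h hb e1 e2).
- apply: (@Lcount_gen p (fun l => mkv (n 0 i2) (l * n 0 i2) (- (n 0 i0 + l * n 0 i1)))).
  + move=> l; apply/eqP => /(congr1 (fun r : 'rV[F]_3 => r 0 i0)); rewrite !mxE /=.
    by apply/eqP.
  + by move=> l; rewrite bformE !mxE /=; ring.
  + move=> l m al be hb /rowP e.
    have e1 := e i0; have e2 := e i1; rewrite !mxE /= in e1 e2.
    exact: (inj_aux h hb e1 e2).
Qed.

End Geo.

Unset Implicit Arguments.

Theorem lemma1 (F : finFieldType) (q_odd : odd #|F|)
  (c a b : point F) (hc : quadric c)
  (ha : a \in nbhd c) (hb : b \in nbhd c) (hab : a != b) :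
  let A := nbhd a :\: nbhd b in
  let B := nbhd b :\: nbhd a in
  let eH := fun u v : point F =>
    brown_adj u v && ~~ (((u \in A) && (v \in B)) || ((u \in B) && (v \in A))) in
  k_vertex_connected [set~ c] eH (#|F| - 6).
Proof.
move: ha hb; rewrite !inE => ha hb.
rewrite quadricE in hc.
exact: (@absmain (point F) (@perp F) (@brown_adj F) (@meet F) #|F|
  (@perpC F) (@adjE F) (@uniq_perp F) (@meetP F) (@Lcount F) c a b hc ha hb hab).
Qed.
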